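(* Define, for $n'\in\mathbb{N}_+$ and $n\in\{0,\dots,n'\}$, $\gamma_{n,n'}=\sum_{j=0}^{n}\binom{n'}{j}{\rm e}_{n'-j}$. Then the collection $(\gamma_{n,n'})_{n'\in\mathbb{N}_+,n\in\{0,\dots,n'\}}$ belongs to $\Gamma$ (i.e. satisfies the bound condition).
   Context: $\sigma(x)=\max(0,x)$; $\mathrm{RL}(n,n')$ ($n,n'\in\mathbb{N}_+$) is the set of maps $h:\mathbb{R}^n\to\mathbb{R}^{n'}$, $h(x)_i=\sigma(\langle x,w_i\rangle+b_i)$ for some $W\in\mathbb{R}^{n'\times n}$ with rows $w_i$, $b\in\mathbb{R}^{n'}$; convention: $\mathrm{RL}(0,n')$ are constant maps $\{0\}\to\mathbb{R}^{n'}$ with $\mathcal{H}_{n'}(\mathcal{S}_h)={\rm e}_0$. $S_h(x)_i=1$ iff $\langle x,w_i\rangle+b_i>0$ else $0$; $\mathcal{S}_h=\{S_h(x):x\in\mathbb{R}^n\}$; $|s|=\sum_is_i$. $V$: sequences $(v_j)_{j\in\mathbb{N}}$ of nonnegative integers with finite sum; ${\rm e}_i$ has $({\rm e}_i)_j=\delta_{ij}$; $v\preceq w$ iff $\sum_{j\ge J}v_j\le\sum_{j\ge J}w_j$ for all $J\in\mathbb{N}$; for finite families, $\max_i(v^{(i)})_J=\max_i\sum_{j\ge J}v^{(i)}_j-\max_i\sum_{j\ge J+1}v^{(i)}_j$. $\mathcal{H}_{n'}(\mathcal{S})=(|\{s\in\mathcal{S}:|s|=j\}|)_j$. $\Gamma$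 (bound condition): families $(\gamma_{n,n'})_{n'\in\mathbb{N}_+,n\in\{0,\dots,n'\}}$ in $V$ with (i) $\max\{\mathcal{H}_{n'}(\mathcal{S}_h):h\in\mathrm{RL}(n,n')\}\preceq\gamma_{n,n'}$ for all $n'\in\mathbb{N}_+$, $n\in\{0,\dots,n'\}$, and (ii) $n\le\tilde n\le n'\Rightarrow\gamma_{n,n'}\preceq\gamma_{\tilde n,n'}$. *)

(* Defs.v *)
From HB Require Import structures.
From mathcomp Require Import all_boot all_order all_algebra.
From mathcomp Require Import boolp reals.
Set Implicit Arguments. Unset Strict Implicit. Unset Printing Implicit Defensive.
Import Order.TTheory GRing.Theory Num.Theory.

(* An element v of V is represented by a finite list s : seq nat,
   with v_j = nth 0 s j (entries beyond the list are 0). *)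
Definition V := seq nat.
Definition vcoef (v : V) (j : nat) : nat := nth 0%N v j.

Definition tailV (J : nat) (v : V) : nat := sumn (drop J v).

Definition leV (v w : V) : Prop := forall J : nat, (tailV J v <= tailV J w)%N.

Definition eV (i : nat) : V := rcons (nseq i 0%N) 1%N.

Definition addV (v w : V) : V :=
  mkseq (fun j => vcoef v j + vcoef w j)%N (maxn (size v) (size w)).
Definition scaleV (c : nat) (v : V) : V := map (fun a => c * a)%N v.

Definition IsMaxV (A : V -> Prop) (m : V) : Prop :=
  exists M : nat -> nat,
    (forall J, (exists2 v, A v & tailV J v = M J) /\
               (forall v, A v -> (tailV J v <= M J)%N)) /\
    (forall J, vcoef m J = M J - M J.+1)%N.

(* A layer h in RL(n,n') (n >= 1) is given by weights W (rows w_i) and biases b.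
   Its activation pattern S_h(x)_i = 1 iff <x,w_i> + b_i > 0. *)
Definition pattern (R : realType) (n n' : nat) (W : 'I_n' -> 'I_n -> R)
  (b : 'I_n' -> R) (x : 'I_n -> R) : {ffun 'I_n' -> bool} :=
  [ffun i => (0 < \sum_(k < n) x k * W i k + b i)%R].

Definition patterns (R : realType) (n n' : nat) (W : 'I_n' -> 'I_n -> R)
  (b : 'I_n' -> R) : {set {ffun 'I_n' -> bool}} :=
  [set s | `[< exists x : 'I_n -> R, pattern W b x = s >]].

Definition weight (n' : nat) (s : {ffun 'I_n' -> bool}) : nat := #|[set i | s i]|.

Definition Hist (n' : nat) (S : {set {ffun 'I_n' -> bool}}) : V :=
  mkseq (fun j => #|[set s in S | weight s == j]|) n'.+1.

(* The set { H_{n'}(S_h) : h in RL(n,n') }, with the paper's convention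
   that for n = 0 this is { e_0 }. *)
Definition HvalsRL (R : realType) (n n' : nat) (v : V) : Prop :=
  if n == 0%N then v = eV 0
  else exists (W : 'I_n' -> 'I_n -> R) (b : 'I_n' -> R), v = Hist (patterns W b).

Definition InGamma (R : realType) (gam : nat -> nat -> V) : Prop :=
  (forall n' n : nat, (0 < n')%N -> (n <= n')%N ->
     exists m : V, IsMaxV (HvalsRL R n n') m /\ leV m (gam n n')) /\
  (forall n' n nt : nat, (0 < n')%N -> (n <= nt <= n')%N ->
     leV (gam n n') (gam nt n')).

Definition gammaB (n n' : nat) : V :=
  \big[addV/[::]]_(j < n.+1) scaleV 'C(n', j) (eV (n' - j)).

(* Main.v *)
Require Import Defs.
From mathcomp Require Import all_boot all_order all_algebra.
From mathcomp Require Import boolp reals.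
From mathcomp Require Import zify ring lra.
Set Implicit Arguments. Unset Strict Implicit. Unset Printing Implicit Defensive.
Import Order.TTheory GRing.Theory Num.Theory.

Definition zeros (n' : nat) (s : {ffun 'I_n' -> bool}) : nat := \sum_(i < n') ~~ s i.
Definition G (n n' k : nat) : nat := \sum_(j < n.+1) 'C(n', j) * (j <= k).

Lemma G_ge1 n n' k : 1 <= G n n' k.
Proof. by rewrite /G big_ord_recl bin0 mul1n leq_addr. Qed.

Lemma G_n'0 n k : G n 0 k = 1.
Proof.
by rewrite /G big_ord_recl bin0 mul1n big1 ?addn0.
Qed.

Lemma G_k0 n n' : G n n' 0 = 1.
Proof.
rewrite /G big_ord_recl bin0 mul1n big1 ?addn0 // => i _.
by rewrite muln0.
Qed.

Lemma G_pascal n n' k : G n.+1 n'.+1 k.+1 = G n n' k + G n.+1 n' k.+1.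
Proof.
rewrite /G (big_ord_recl n.+1) (big_ord_recl n.+1 (fun j => 'C(n', j) * _)) !bin0 !mul1n.
rewrite addnCA; congr (_ + _).
rewrite addnC -big_split /=; apply: eq_bigr => i _.
rewrite /bump /= add1n binS ltnS; lia.
Qed.

Lemma G_mono n n' k : G n n' k <= G n n'.+1 k.
Proof.
apply: leq_sum => -[[|j] Hj] _; rewrite ?bin0 //.
by rewrite leq_mul2r binS leq_addr orbT.
Qed.


Lemma sum_trunc (F : nat -> nat) K N : (forall i, K <= i -> F i = 0) -> (forall i, N <= i -> F i = 0) ->
  \sum_(i < K) F i = \sum_(i < N) F i.
Proof.
have H : forall a c, a <= c -> (forall i, a <= i -> F i = 0) -> \sum_(i<c) F i = \sum_(i<a) F i.
  move=> a c ac Fa; rewrite -!(big_mkord xpredT) (big_cat_nat (leq0n a) ac) /=.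
  rewrite [X in _ + X]big_nat_cond [X in _ + X]big1 ?addn0 // => i /andP[/andP[Hi _] _]; exact: Fa.
move=> HK HN; case: (leqP K N) => h; first by rewrite (H K N).
by rewrite (H N K) // ltnW.
Qed.

Lemma tail_sum v J N : (forall i, N <= i -> vcoef v i = 0) ->
  tailV J v = \sum_(i < N) vcoef v (J + i).
Proof.
move=> HN; rewrite /tailV sumnE (big_nth 0) big_mkord.
under eq_bigr do rewrite nth_drop.
apply: (sum_trunc (F := fun i => vcoef v (J + i))) => i Hi.
- by rewrite /vcoef nth_default //; move: Hi; rewrite size_drop; lia.
- by apply: HN; lia.
Qed.

Lemma vcoef_add v w j : vcoef (addV v w) j = vcoef v j + vcoef w j.
Proof.
rewrite /addV /vcoef; case: (ltnP j (maxn (size v) (size w))) => h.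
- by rewrite nth_mkseq.
- rewrite nth_default ?size_mkseq // !nth_default //; lia.
Qed.

Lemma vcoef_scale c v j : vcoef (scaleV c v) j = c * vcoef v j.
Proof.
rewrite /scaleV /vcoef; case: (ltnP j (size v)) => h.
- by rewrite (nth_map 0).
- by rewrite !nth_default ?size_map ?muln0.
Qed.

Lemma vcoef_e i j : vcoef (eV i) j = (i == j).
Proof.
rewrite /eV /vcoef nth_rcons size_nseq.
rewrite nth_nseq if_same eq_sym.
by case: ltngtP.
Qed.

Lemma vcoef_gamma n n' i : vcoef (gammaB n n') i = \sum_(j < n.+1) 'C(n', j) * (n' - j == i).
Proof.
rewrite /gammaB (big_morph (fun v => vcoef v i) (fun v w => vcoef_add v w i) (_ : vcoef [::] i = 0)).
  by apply: eq_bigr => j _; rewrite vcoef_scale vcoef_e.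
by rewrite /vcoef nth_nil.
Qed.

Lemma sum_eq_ind x J N : \sum_(i < N) (x == J + i) = (J <= x < J + N).
Proof.
elim: N => [|N IH]; first by rewrite big_ord0; lia.
rewrite big_ord_recr /= IH; lia.
Qed.

Lemma tail_gamma n n' J : tailV J (gammaB n n') = \sum_(j < n.+1) 'C(n', j) * (J <= n' - j).
Proof.
rewrite (tail_sum _ (N := n'.+1)) => [|i Hi]; last first.
  rewrite vcoef_gamma big1 // => j _; case: eqP; rewrite ?muln0 //; lia.
under eq_bigr do rewrite vcoef_gamma.
rewrite exchange_big /=.
apply: eq_bigr => j _; rewrite -big_distrr /=; congr (_ * _).
rewrite sum_eq_ind; case: (J <= n' - j) => //=; lia.
Qed.


Lemma card_sum (T : finType) (S : {set T}) (P : pred T) :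
  #|[set s in S | P s]| = \sum_(s in S) P s.
Proof.
rewrite -sum1_card big_mkcond [RHS]big_mkcond; apply: eq_bigr => s _; rewrite !inE.
by case: (s \in S); case: (P s).
Qed.

Lemma weight_le n' (s : {ffun 'I_n' -> bool}) : weight s <= n'.
Proof. by rewrite /weight -[X in _ <= X]card_ord max_card. Qed.

Lemma weight_zeros n' (s : {ffun 'I_n' -> bool}) : weight s + zeros s = n'.
Proof.
rewrite /weight /zeros -sum1_card big_mkcond -big_split /=.
transitivity (\sum_(i < n') 1); last by rewrite sum1_card card_ord.
by apply: eq_bigr => i _; rewrite inE; case: (s i).
Qed.

Lemma vcoef_Hist n' (S : {set {ffun 'I_n' -> bool}}) i :
  vcoef (Hist S) i = #|[set s in S | weight s == i]|.
Proof.
rewrite /vcoef; case: (ltnP i n'.+1) => h; first by rewrite nth_mkseq.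
rewrite nth_default ?size_mkseq // card_sum big1 // => s _.
have := weight_le s; case: eqP => // ->; lia.
Qed.

Lemma tail_Hist n' (S : {set {ffun 'I_n' -> bool}}) J :
  tailV J (Hist S) = #|[set s in S | J <= weight s]|.
Proof.
rewrite (tail_sum _ (N := n'.+1)) => [|i Hi]; last by rewrite /vcoef nth_default // size_mkseq.
under eq_bigr do rewrite vcoef_Hist card_sum.
rewrite exchange_big card_sum; apply: eq_bigr => s _.
rewrite sum_eq_ind; have := weight_le s; lia.
Qed.

Lemma tail_mono v J : tailV J.+1 v <= tailV J v.
Proof.
rewrite /tailV -[X in _ <= sumn X](cat_take_drop 1) sumn_cat drop_drop add1n.
exact: leq_addl.
Qed.

Lemma telesc (M : nat -> nat) : (forall j, M j.+1 <= M j) ->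
  forall J N, \sum_(i < N) (M (J + i) - M (J + i).+1) = M J - M (J + N).
Proof.
move=> Hm.
have anti : forall a d, M (a + d) <= M a.
  move=> a; elim => [|d IH]; first by rewrite addn0.
  by rewrite addnS; apply: leq_trans (Hm _) IH.
move=> J; elim => [|N IH]; first by rewrite big_ord0 addn0 subnn.
rewrite big_ord_recr /= IH; have h1 := anti J N; have h2 := Hm (J + N); rewrite addnS; lia.
Qed.

Lemma sum_widen (F : nat -> nat) n1 n2 : n1 <= n2 -> \sum_(i < n1) F i <= \sum_(i < n2) F i.
Proof.
move=> h; rewrite (big_ord_widen n2 F h) big_mkcond; apply: leq_sum => i _.
by case: ifP.
Qed.

Section Geo.
Variable R : realType.
Local Open Scope ring_scope.

Lemma affine_comb n (x y w : 'I_n -> R) (t c : R) :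
  \sum_(k < n) (x k + t * (y k - x k)) * w k + c =
  (\sum_(k < n) x k * w k + c) + t * ((\sum_(k < n) y k * w k + c) - (\sum_(k < n) x k * w k + c)).
Proof.
have -> : \sum_(k < n) (x k + t * (y k - x k)) * w k =
   \sum_(k < n) x k * w k + t * (\sum_(k < n) y k * w k - \sum_(k < n) x k * w k).
  rewrite -sumrB mulr_sumr -big_split /=; apply: eq_bigr => k _; ring.
ring.
Qed.

Lemma restrict m n' (W : 'I_n' -> 'I_m.+1 -> R) (b : 'I_n' -> R)
   (w0 : 'I_m.+1 -> R) (b0 : R) (j0 : 'I_m.+1) : w0 j0 != 0 ->
  exists (W2 : 'I_n' -> 'I_m -> R) (b2 : 'I_n' -> R), forall z : 'I_m.+1 -> R,
    \sum_(k < m.+1) z k * w0 k + b0 = 0 ->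
    forall i, \sum_(j < m) z (lift j0 j) * W2 i j + b2 i = \sum_(k < m.+1) z k * W i k + b i.
Proof.
move=> Hw.
exists (fun i j => W i (lift j0 j) - W i j0 * w0 (lift j0 j) / w0 j0).
exists (fun i => b i - W i j0 * b0 / w0 j0).
move=> z Hz i.
rewrite (bigD1_ord j0) //= in Hz; rewrite (bigD1_ord j0) //=.
set Sw := \sum_(j < m) z (lift j0 j) * w0 (lift j0 j) in Hz.
have -> : \sum_(j < m) z (lift j0 j) * (W i (lift j0 j) - W i j0 * w0 (lift j0 j) / w0 j0)
   = \sum_(j < m) z (lift j0 j) * W i (lift j0 j) - W i j0 / w0 j0 * Sw.
  rewrite /Sw mulr_sumr -sumrB; apply: eq_bigr => j _; ring.
have Hzj : z j0 = - (Sw + b0) / w0 j0.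
  apply: (mulIf Hw); rewrite divfK //; apply/eqP; rewrite -subr_eq0 -Hz; apply/eqP; ring.
rewrite Hzj; field; exact: Hw.
Qed.


Lemma segment n (x1 x0 w0 : 'I_n -> R) b0 :
  0 < \sum_(k < n) x1 k * w0 k + b0 -> \sum_(k < n) x0 k * w0 k + b0 <= 0 ->
  exists t, [/\ 0 < t, t <= 1 &
     \sum_(k < n) (x1 k + t * (x0 k - x1 k)) * w0 k + b0 = 0].
Proof.
set a1 := \sum_(k < n) x1 k * w0 k + b0; set a0 := \sum_(k < n) x0 k * w0 k + b0.
move=> H1 H0.
have Hd : 0 < a1 - a0 by lra.
exists (a1 / (a1 - a0)); split.
- by rewrite divr_gt0.
- by rewrite ler_pdivrMr // mul1r; lra.
- rewrite affine_comb -/a1 -/a0; field; lra.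
Qed.

Lemma sign_comb (t u1 u0 : R) : 0 < t -> t <= 1 -> (0 < u1) = (0 < u0) ->
  (0 < u1 + t * (u0 - u1)) = (0 < u1).
Proof.
move=> Ht Ht1 E; case: (boolP (0 < u1)) => H1.
- rewrite H1 in E; apply/idP; nra.
- rewrite (negbTE H1) in E; apply/negbTE; move: H1; move/esym/negbT: E; rewrite -!real_leNgt ?num_real // => H0 H1.
  nra.
Qed.


Lemma patternsP n n' (W : 'I_n' -> 'I_n -> R) b s :
  reflect (exists x, pattern W b x = s) (s \in patterns W b).
Proof. rewrite inE; exact: asboolP. Qed.

Definition proj n' (s : {ffun 'I_n'.+1 -> bool}) : {ffun 'I_n' -> bool} :=
  [ffun i => s (lift ord0 i)].

Lemma zeros_proj n' (s : {ffun 'I_n'.+1 -> bool}) : zeros s = (~~ s ord0 + zeros (proj s))%N.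
Proof. by rewrite /zeros big_ord_recl; congr (_ + _); apply: eq_bigr => i _; rewrite ffunE. Qed.

Lemma proj_inj n' (s t : {ffun 'I_n'.+1 -> bool}) : s ord0 = t ord0 -> proj s = proj t -> s = t.
Proof.
move=> E0 E; apply/ffunP => i; case: (unliftP ord0 i) => [j ->|->] //.
by move/ffunP: E => /(_ j); rewrite !ffunE.
Qed.

Definition PS n n' (W : 'I_n' -> 'I_n -> R) b k := [set s in patterns W b | (zeros s <= k)%N].
Definition I1 n n' (W : 'I_n'.+1 -> 'I_n -> R) b k :=
  [set proj s | s in PS W b k :&: [set s : {ffun 'I_n'.+1 -> bool} | s ord0]].
Definition I0 n n' (W : 'I_n'.+1 -> 'I_n -> R) b k :=
  [set proj s | s in PS W b k :\: [set s : {ffun 'I_n'.+1 -> bool} | s ord0]].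

Lemma inter_mem n n' (W : 'I_n'.+1 -> 'I_n -> R) b k s' :
  s' \in I1 W b k :&: I0 W b k ->
  exists x1 x0 s0, [/\ 0 < \sum_(j < n) x1 j * W ord0 j + b ord0,
     \sum_(j < n) x0 j * W ord0 j + b ord0 <= 0,
     forall i, s' i = (0 < \sum_(j < n) x1 j * W (lift ord0 i) j + b (lift ord0 i)),
     forall i, s' i = (0 < \sum_(j < n) x0 j * W (lift ord0 i) j + b (lift ord0 i)) &
     [/\ (zeros s0 <= k)%N, ~~ s0 ord0 & proj s0 = s']].
Proof.
rewrite inE => /andP[/imsetP[s1 Hs1 ->] /imsetP[s0 Hs0 E]].
move: Hs1 Hs0; rewrite !inE => /andP[/andP[/asboolP[x1 Ex1] _] H1].
move=> /andP[H0 /andP[/asboolP[x0 Ex0] Hz0]].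
exists x1, x0, s0; split.
- by move: H1; rewrite -Ex1 ffunE.
- by move: H0; rewrite -Ex0 ffunE real_leNgt ?num_real.
- by move=> i; rewrite -Ex1 !ffunE.
- by move=> i; rewrite E -Ex0 !ffunE.
- by split.
Qed.


Lemma PS_proj n n' (W : 'I_n'.+1 -> 'I_n -> R) b k s :
  s \in PS W b k -> proj s \in PS (fun i => W (lift ord0 i)) (fun i => b (lift ord0 i)) k.
Proof.
rewrite !inE => /andP[/asboolP[x Ex] Hz]; apply/andP; split.
- apply/asboolP; exists x; apply/ffunP => i; by rewrite -Ex !ffunE.
- by move: Hz; rewrite zeros_proj; apply: leq_trans; rewrite leq_addl.
Qed.

Lemma inter_bound n' (IH : forall n (W : 'I_n' -> 'I_n -> R) b k, (#|PS W b k| <= G n n' k)%N)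
  n (W : 'I_n'.+1 -> 'I_n -> R) b k :
  (#|I1 W b k :&: I0 W b k| <= (if k is k'.+1 then (if n is m.+1 then G m n' k' else 0) else 0))%N.
Proof.
case: k => [|k'].
  rewrite leqn0 cards_eq0; apply/eqP/setP => s'; rewrite in_set0; apply/negbTE/negP.
  move=> /inter_mem [x1 [x0 [s0 [_ _ _ _ [Hz H0 _]]]]].
  by move: Hz; rewrite zeros_proj H0.
case: (boolP [exists j, W ord0 j != 0]) => [/existsP [j0 Hj0] | Hno].
- revert W b j0 Hj0; case: n => [|m] W b j0 Hj0; first by move: (ltn_ord j0); rewrite ltn0.
  have [W2 [b2 HW]] := restrict (fun i => W (lift ord0 i)) (fun i => b (lift ord0 i)) (b ord0) Hj0.
  apply: leq_trans (IH m W2 b2 k'). apply: subset_leq_card; apply/subsetP => s' Hs'.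
  have [x1 [x0 [s0 [H1 H0 E1 E0 [Hz Hs0 Ps0]]]]] := inter_mem Hs'.
  have [t [Ht Ht1 Hf]] := segment H1 H0.
  set z := fun k => x1 k + t * (x0 k - x1 k) in Hf.
  rewrite inE; apply/andP; split.
  + apply/patternsP; exists (fun j => z (lift j0 j)); apply/ffunP => i; rewrite ffunE (HW z Hf).
    rewrite /z affine_comb sign_comb //; rewrite ?E1 //.
    by rewrite -E1 -E0.
  + by move: Hz; rewrite zeros_proj Hs0 Ps0.
- suff -> : I1 W b k'.+1 :&: I0 W b k'.+1 = set0 by rewrite cards0.
  apply/setP => s'; rewrite in_set0; apply/negbTE/negP.
  move=> /inter_mem [x1 [x0 [s0 [H1 H0 _ _ _]]]].
  have Z : forall x : 'I_n -> R, \sum_(j < n) x j * W ord0 j = 0.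
    move=> x; apply: big1 => j _.
    have : ~~ (W ord0 j != 0) by apply: contra Hno => Hj; apply/existsP; exists j.
    by rewrite negbK => /eqP ->; rewrite mulr0.
  rewrite !Z in H1 H0; lra.
Qed.

Lemma core n' : forall n (W : 'I_n' -> 'I_n -> R) b k, (#|PS W b k| <= G n n' k)%N.
Proof.
elim: n' => [|n' IH] n W b k.
  apply: leq_trans (max_card _) _; by rewrite card_ffun card_bool card_ord expn0 G_ge1.
have HP := cardsID [set s : {ffun 'I_n'.+1 -> bool} | s ord0] (PS W b k).
have e1 : #|PS W b k :&: [set s : {ffun 'I_n'.+1 -> bool} | s ord0]| = #|I1 W b k|.
  rewrite /I1 card_in_imset // => s t; rewrite !inE => /andP[_ Hs] /andP[_ Ht].
  by apply: proj_inj; rewrite Hs Ht.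
have e0 : #|PS W b k :\: [set s : {ffun 'I_n'.+1 -> bool} | s ord0]| = #|I0 W b k|.
  rewrite /I0 card_in_imset // => s t; rewrite !inE => /andP[Hs _] /andP[Ht _].
  by apply: proj_inj; rewrite (negbTE Hs) (negbTE Ht).
rewrite -HP e1 e0 -cardsUI.
have HU : (#|I1 W b k :|: I0 W b k| <= G n n' k)%N.
  apply: leq_trans (IH n (fun i => W (lift ord0 i)) (fun i => b (lift ord0 i)) k).
  apply: subset_leq_card; apply/subsetP => s'; rewrite inE => /orP[] /imsetP[s Hs ->];
  move: Hs; rewrite inE => /andP[? ?]; exact: PS_proj.
apply: leq_trans (leq_add HU (inter_bound IH W b k)) _.
clear HP e1 e0 HU; case: k => [|k']; case: n W b => [|m] W b /=; rewrite ?addn0 ?G_mono //.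
by rewrite G_pascal addnC.
Qed.


Lemma key n' n v J : (0 < n')%N -> (n <= n')%N -> HvalsRL R n n' v ->
  (tailV J v <= tailV J (gammaB n n'))%N.
Proof.
move=> Hn' Hn; rewrite /HvalsRL tail_gamma; case: eqP => [-> ->|/eqP n0 [W [b ->]]].
  by rewrite big_ord1 bin0 mul1n subn0; case: J.
rewrite tail_Hist; case: (ltnP n' J) => hJ.
  rewrite card_sum big1 // => s _; have := weight_le s; lia.
apply: (@leq_trans #|PS W b (n' - J)|).
  apply: subset_leq_card; apply/subsetP => s; rewrite !inE => /andP[Hs Hw]; rewrite Hs /=.
  have := weight_zeros s; lia.
apply: leq_trans (core W b (n' - J)) _.
apply: leq_sum => j _; apply: leq_mul => //; lia.
Qed.

End Geo.

Theorem mainTheorem9 (R : realType) : InGamma R gammaB.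
Proof.
split; last first.
  move=> n' n nt Hn' /andP[Hnt _] J; rewrite !tail_gamma.
  by apply: (sum_widen (fun j => 'C(n', j) * (J <= n' - j))%N).
move=> n' n Hn' Hn.
pose A := HvalsRL R n n'.
have Avan : forall v, A v -> forall i, (n'.+1 <= i)%N -> vcoef v i = 0%N.
  move=> v; rewrite /A /HvalsRL; case: eqP => [_ -> i Hi|_ [W [b ->]] i Hi].
    by rewrite vcoef_e; case: i Hi.
  by rewrite /vcoef nth_default // size_mkseq.
have Aex : exists v, A v.
  rewrite /A /HvalsRL; case: eqP => _; first by exists (eV 0).
  pose W0 := fun (_ : 'I_n') (_ : 'I_n) => (0%R : R); pose b0 := fun _ : 'I_n' => (0%R : R).
  by exists (Hist (patterns W0 b0)), W0, b0.
pose P J := fun t => `[< exists2 v, A v & tailV J v = t >].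
have exP : forall J, exists t, P J t.
  move=> J; case: Aex => v Av; exists (tailV J v); apply/asboolP; by exists v.
have ubP : forall J t, P J t -> (t <= tailV J (gammaB n n'))%N.
  move=> J t /asboolP[v Av <-]; exact: key Hn' Hn Av.
pose M J := ex_maxn (exP J) (ubP J).
have MP : forall J, (exists2 v, A v & tailV J v = M J) /\ (forall v, A v -> (tailV J v <= M J)%N).
  move=> J; rewrite /M; case: ex_maxnP => t /asboolP[v Av Ev] Hmax; split; first by exists v.
  move=> w Aw; apply: Hmax; apply/asboolP; by exists w.
have Mmono : forall J, (M J.+1 <= M J)%N.
  move=> J; have [[v Av Ev] _] := MP J.+1; rewrite -Ev.
  apply: leq_trans (tail_mono v J) _; exact: (MP J).2.
have M0 : forall J, (n'.+1 <= J)%N -> M J = 0%N.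
  move=> J HJ; have [[v Av <-] _] := MP J.
  rewrite (tail_sum J (Avan v Av)) big1 // => i _; apply: (Avan v Av); lia.
pose m := mkseq (fun J => M J - M J.+1)%N n'.+1.
have Mc : forall J, vcoef m J = (M J - M J.+1)%N.
  move=> J; rewrite /vcoef; case: (ltnP J n'.+1) => h; first by rewrite nth_mkseq.
  by rewrite nth_default ?size_mkseq // !M0 // ltnW.
exists m; split.
  by exists M; split => J; [exact: MP | exact: Mc].
move=> J; rewrite (tail_sum J (N := n'.+1)) => [|i Hi]; last by rewrite Mc !M0 // ltnW.
under eq_bigr do rewrite Mc.
rewrite telesc // (M0 (J + n'.+1)) ?subn0; last by rewrite leq_addl.
have [[v Av <-] _] := MP J; exact: key Hn' Hn Av.
Qed.
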